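(* Let $F$ and $G$ be one-dimensional formal groups over a commutative ring $R$. Then for every $n$ there is a natural isomorphism $T_1 H^n(F;G)\cong H^n(F;T_1G)$, where $T_1G\cong\hat{\mathbb{G}}_a$.
   Context: For an $R$-algebra $S$, the Lubin–Tate cochain group $A^n(F;G)(S)$ is the group (under the group law of $G$) of morphisms of formal schemes $F^{\times n}\to G$ over $S$ (in coordinates: power series in $n$ variables with zero constant term, composed with the formal group laws). These form a cochain complex with coboundary $\delta$ induced by the group law of $F$: $(\delta f)(x_0,\dots,x_n)=f(x_1,\dots,x_n)-_G f(x_0+_Fx_1,x_2,\dots)+_G\cdots\pm_G f(x_0,\dots,x_{n-1})$ (standard alternating sum of face maps, with $G$-operations). $H^n(F;G)(S)$ is the $n$-th cohomology of this complex. For a group-valued functor $X$ on $R$-algebras, the tangent space at the identity is $T_1X(S)=\ker\big(X(S[\epsilon]/\epsilon^2)\to X(S)\big)$ induced by $\epsilon\mapsto 0$. *)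

(* Defs.v *)
From HB Require Import structures.
From mathcomp Require Import all_boot all_algebra ring.
Set Implicit Arguments. Unset Strict Implicit. Unset Printing Implicit Defensive.
Import GRing.Theory.
Local Open Scope ring_scope.

Section Dual.
Variable S : comPzRingType.
Definition dual : Type := (S * S)%type.
HB.instance Definition _ := GRing.Zmodule.copy dual (S * S)%type.
Definition dual_one : dual := (1, 0).
Definition dual_mul (x y : dual) : dual := (x.1 * y.1, x.1 * y.2 + x.2 * y.1).
Lemma dual_mulA : associative dual_mul.
Proof. by move=> [a b] [c d] [e f]; rewrite /dual_mul /=; congr pair; ring. Qed.
Lemma dual_mulC : commutative dual_mul.
Proof. by move=> [a b] [c d]; rewrite /dual_mul /=; congr pair; ring. Qed.
Lemma dual_mul1 : left_id dual_one dual_mul.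
Proof. by move=> [a b]; rewrite /dual_mul /=; congr pair; ring. Qed.
Lemma dual_mulDl : left_distributive dual_mul +%R.
Proof. by move=> [a b] [c d] [e f]; rewrite /dual_mul /=; congr pair; rewrite /= ?mulrDl ?mulrDr; ring. Qed.
HB.instance Definition _ := GRing.Zmodule_isComPzRing.Build dual dual_mulA dual_mulC dual_mul1 dual_mulDl.
End Dual.

Definition mon (n : nat) := 'I_n -> nat.
Definition mdeg n (m : mon n) : nat := (\sum_(i < n) m i)%N.

Section PowerSeries.
Variable T : comPzRingType.

Definition ps (n : nat) := mon n -> T.

Definition ps_zero n : ps n := fun _ => 0.
Definition ps_add n (f g : ps n) : ps n := fun m => f m + g m.
Definition ps_opp n (f : ps n) : ps n := fun m => - f m.
Definition ps_one n : ps n := fun m => if [forall i, m i == 0%N] then 1 else 0.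
Arguments ps_zero n : clear implicits.
Arguments ps_one n : clear implicits.
Definition ps_var n (i : 'I_n) : ps n :=
  fun m => if [forall j, m j == (j == i) :> nat] then 1 else 0.
Definition ps_mul n (f g : ps n) : ps n := fun m =>
  \sum_(a : {ffun 'I_n -> 'I_(mdeg m).+1} | [forall i, (a i <= m i)%N])
     f (fun i => nat_of_ord (a i)) * g (fun i => (m i - a i)%N).
Definition ps_exp n (f : ps n) (k : nat) : ps n := iter k (ps_mul f) (ps_one n).
Definition ps_prodexp k n (g : 'I_k -> ps n) (e : mon k) : ps n :=
  \big[@ps_mul n/ps_one n]_(i < k) ps_exp (g i) (e i).
(* Substitution f(g_1,...,g_k), meaningful when all g_i have zero constant
   term: then only exponents e with |e| <= |m| contribute to the
   coefficient of m, so the sum below is the full (finite) sum. *)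
Definition ps_subst k n (f : ps k) (g : 'I_k -> ps n) : ps n := fun m =>
  \sum_(e : {ffun 'I_k -> 'I_(mdeg m).+1})
     f (fun i => nat_of_ord (e i)) * ps_prodexp g (fun i => nat_of_ord (e i)) m.

Definition zero_const n (f : ps n) : Prop := f (fun _ => 0%N) = 0.

Definition vec2 n (a b : ps n) : 'I_2 -> ps n :=
  fun i => if i == ord0 then a else b.

Definition is_fgl (F : ps 2) : Prop :=
  [/\ ps_subst F (vec2 (ps_var (ord0 : 'I_1)) (ps_zero 1)) = ps_var ord0,
      ps_subst F (vec2 (ps_zero 1) (ps_var (ord0 : 'I_1))) = ps_var ord0,
      ps_subst F (vec2 (ps_subst F (vec2 (ps_var (0 : 'I_3)) (ps_var (1 : 'I_3))))
                       (ps_var (2 : 'I_3)))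
        = ps_subst F (vec2 (ps_var (0 : 'I_3))
                       (ps_subst F (vec2 (ps_var (1 : 'I_3)) (ps_var (2 : 'I_3))))) &
      ps_subst F (vec2 (ps_var (1 : 'I_2)) (ps_var (0 : 'I_2))) = F].

Definition is_fgl_inv (G : ps 2) (iG : ps 1) : Prop :=
  zero_const iG /\ ps_subst G (vec2 (ps_var ord0) iG) = ps_zero 1.

Definition ga_law : ps 2 := ps_add (ps_var ord0) (ps_var (1 : 'I_2)).
Definition ga_inv : ps 1 := ps_opp (ps_var ord0).

Definition addG (G : ps 2) n (f g : ps n) : ps n := ps_subst G (vec2 f g).
Definition negG (iG : ps 1) n (f : ps n) : ps n := ps_subst iG (fun _ => f).

(* i-th face map F^{n+1} -> F^n, 0 <= i <= n+1 :
   i = 0     : (x_1, ..., x_n)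
   1<=i<=n   : (x_0, ..., x_{i-1} +_F x_i, ..., x_n)
   i = n+1   : (x_0, ..., x_{n-1})                        *)
Definition face (F : ps 2) n (i : nat) : 'I_n -> ps n.+1 := fun j =>
  if (j.+1 < i)%N then ps_var (inord j)
  else if j.+1 == i then ps_subst F (vec2 (ps_var (inord j)) (ps_var (inord j.+1)))
  else ps_var (inord j.+1).
Arguments face F n i : clear implicits.

Definition delta (F G : ps 2) (iG : ps 1) n (f : ps n) : ps n.+1 :=
  \big[@addG G n.+1/ps_zero n.+1]_(i < n.+2)
     (if odd i then negG iG (ps_subst f (face F n i)) else ps_subst f (face F n i)).

Definition cochain n (f : ps n) : Prop := zero_const f.
Definition cocycle (F G : ps 2) (iG : ps 1) n (f : ps n) : Prop :=
  cochain f /\ delta F G iG f = ps_zero n.+1.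
Definition coboundary (F G : ps 2) (iG : ps 1) n : ps n -> Prop :=
  match n as n0 return ps n0 -> Prop with
  | 0 => fun f => f = ps_zero 0
  | k.+1 => fun f => exists g : ps k, cochain g /\ f = delta F G iG g
  end.
Definition cohomologous (F G : ps 2) (iG : ps 1) n (f g : ps n) : Prop :=
  exists b, coboundary F G iG b /\ f = addG G g b.

End PowerSeries.
Arguments ps_zero {T} n.
Arguments ps_one {T} n.
Arguments face {T} F n i.

Definition ps_map (T T' : comPzRingType) (h : T -> T') n (f : ps T n) : ps T' n :=
  fun m => h (f m).

Definition to_dual (S : comPzRingType) (s : S) : dual S := (s, 0).
Definition dual_map (S S' : comPzRingType) (h : S -> S') (x : dual S) : dual S' :=
  (h x.1, h x.2).
Definition dual_red (S : comPzRingType) (x : dual S) : S := x.1.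

(* z : ps (dual S) n represents an element of T_1 H^n(F;G)(S):
   a cocycle over S[eps] whose image in H^n(F;G)(S) is trivial. *)
Definition inT1 (R S : comPzRingType) (phi : R -> S) (F G : ps R 2) (iG : ps R 1)
    n (z : ps (dual S) n) : Prop :=
  let phid := fun r => to_dual (phi r) in
  cocycle (ps_map phid F) (ps_map phid G) (ps_map phid iG) z /\
  cohomologous (ps_map phi F) (ps_map phi G) (ps_map phi iG)
               (ps_map (@dual_red S) z) (ps_zero n).

(* Main.v *)
Require Import Defs.
From HB Require Import structures.
From mathcomp Require Import all_boot all_algebra.
From mathcomp Require Import mpoly.
From Stdlib Require Import FunctionalExtensionality.
Set Implicit Arguments. Unset Strict Implicit. Unset Printing Implicit Defensive.
Import GRing.Theory.
Local Open Scope ring_scope.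

Definition toM n (m : mon n) : 'X_{1..n} := [multinom m i | i < n].

Lemma mdeg_toM n (m : mon n) : mdeg (toM m) = Defs.mdeg m.
Proof. by rewrite mdegE; apply: eq_bigr => i _; rewrite mnmE. Qed.

Lemma toM_fun n (m : 'X_{1..n}) : toM (fun i => m i) = m.
Proof. by apply/mnmP => i; rewrite mnmE. Qed.

Lemma fun_toM n (m : mon n) : (fun i => toM m i) = m.
Proof. by apply: functional_extensionality => i; rewrite mnmE. Qed.

Lemma mnm_le_mdeg n (m : 'X_{1..n}) i : (m i <= mdeg m)%N.
Proof. by rewrite mdegE (bigD1 i) //= leq_addr. Qed.

Lemma sum_ffun_bm (V : nmodType) k N (F : mon k -> V) :
  (forall e, (N < Defs.mdeg e)%N -> F e = 0) ->
  \sum_(e : {ffun 'I_k -> 'I_N.+1}) F (fun i => e i) =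
  \sum_(b : 'X_{1..k < N.+1}) F (fun i => b i).
Proof.
move=> F0.
have b0P : (mdeg (0%MM : 'X_{1..k}) < N.+1)%N by rewrite mdeg0.
pose b0 : 'X_{1..k < N.+1} := BMultinom b0P.
pose h (e : {ffun 'I_k -> 'I_N.+1}) : 'X_{1..k < N.+1} :=
  insubd b0 (toM (fun i => nat_of_ord (e i))).
pose h' (b : 'X_{1..k < N.+1}) : {ffun 'I_k -> 'I_N.+1} := [ffun i => inord (b i)].
have E : forall b, toM (fun i => nat_of_ord (h' b i)) = b.
  move=> b; apply/mnmP => i; rewrite mnmE ffunE inordK //.
  by rewrite ltnS (leq_trans (mnm_le_mdeg b i)) // -ltnS bmdeg.
have hh' : forall b, h (h' b) = b.
  move=> b; apply: val_inj; rewrite /h insubdK E //=; exact: bmdeg.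
rewrite (reindex_onto h h' (P := xpredT)); last by move=> b _; exact: hh'.
rewrite [LHS](bigID (fun e : {ffun 'I_k -> 'I_N.+1} => (Defs.mdeg (fun i => nat_of_ord (e i)) <= N)%N)) /=.
rewrite [X in _ + X]big1 ?addr0; last by move=> e; rewrite -ltnNge => /F0.
apply: eq_big => e.
  apply/idP/eqP => [le|].
    apply/ffunP => i; rewrite /h' ffunE /h insubdK; last by rewrite -topredE /= mdeg_toM ltnS.
    by apply: val_inj; rewrite /= mnmE inordK.
  move=> <-; rewrite -mdeg_toM E -ltnS; exact: bmdeg.



move=> le; congr F; apply: functional_extensionality => i.
by rewrite /h insubdK /= ?mnmE // -topredE /= mdeg_toM ltnS.
Qed.

Lemma mdeg_fun n (m : 'X_{1..n}) : Defs.mdeg (fun i => m i) = mdeg m.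
Proof. by rewrite -mdeg_toM toM_fun. Qed.

Section Bridge.
Variable T : comNzRingType.

Lemma mcoeff_sum n (I : Type) (r : seq I) (P : pred I) (F : I -> {mpoly T[n]}) m :
  (\sum_(i <- r | P i) F i)@_m = \sum_(i <- r | P i) (F i)@_m.
Proof. exact: raddf_sum. Qed.

Definition Tr n N (f : ps T n) : {mpoly T[n]} :=
  \sum_(k : 'X_{1..n < N.+1}) f (fun i => k i) *: 'X_[k].

Lemma Tr_coef n N (f : ps T n) (k : 'X_{1..n}) :
  (Tr N f)@_k = if (mdeg k <= N)%N then f (fun i => k i) else 0.
Proof.
rewrite /Tr mcoeff_sum; under eq_bigr do rewrite mcoeffZ mcoeffX.
case: ifP => h.
  rewrite (bigD1 (BMultinom (h : (mdeg k < N.+1)%N))) //= eqxx mulr1 big1 ?addr0 //.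
  by move=> b; rewrite bmeqP /= => /negbTE ->; rewrite mulr0.
apply: big1 => b _; case: eqP => [e|]; last by rewrite mulr0.
by move: (bmdeg b); rewrite e ltnS h.
Qed.

Definition corr n N (f : ps T n) (p : {mpoly T[n]}) :=
  forall m : 'X_{1..n}, (mdeg m <= N)%N -> f (fun i => m i) = p@_m.
Definition eqN n N (p q : {mpoly T[n]}) :=
  forall m : 'X_{1..n}, (mdeg m <= N)%N -> p@_m = q@_m.

Lemma corr_Tr n N (f : ps T n) : corr N f (Tr N f).
Proof. by move=> m h; rewrite Tr_coef h. Qed.

Lemma mdeg_le_mnm n (a b : 'X_{1..n}) : (a <= b)%MM -> (mdeg a <= mdeg b)%N.
Proof. by move/mnm_lepP => h; rewrite !mdegE; apply: leq_sum => i _; apply: h. Qed.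

Lemma mulE n (p q : {mpoly T[n]}) m :
  (p * q)@_m = \sum_(k : 'X_{1..n < (mdeg m).+1} | (k <= m)%MM) p@_k * q@_(m-k).
Proof. exact: mcoeff_poly_mul_lin. Qed.

Lemma eqN_mul n N (p p' q q' : {mpoly T[n]}) :
  eqN N p p' -> eqN N q q' -> eqN N (p * q) (p' * q').
Proof.
move=> hp hq m hm; rewrite !mulE; apply: eq_bigr => k hk.
rewrite hp ?hq //; apply: leq_trans hm.
  by apply: mdeg_le_mnm; apply: lem_subr.
by apply: mdeg_le_mnm.
Qed.

Lemma corr_mul n N (f g : ps T n) p q :
  corr N f p -> corr N g q -> corr N (ps_mul f g) (p * q).
Proof.
move=> hf hg m hm; rewrite /ps_mul big_mkcond /=.
pose F (e : mon n) := if [forall i, (e i <= m i)%N] then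
   f e * g (fun i => (m i - e i)%N) else 0.
rewrite (sum_ffun_bm (F := F)); last first.
  move=> e lt; rewrite /F; case: ifP => // /forallP le; exfalso.
  move: lt; rewrite ltnNge; apply/negP/negPn.
  by rewrite /Defs.mdeg; apply: leq_sum => i _; exact: le i.
rewrite mdeg_fun mulE [RHS]big_mkcond /=; apply: eq_bigr => b _.
rewrite /F; have -> : [forall i, (b i <= m i)%N] = (b <= m)%MM.
  by apply/forallP/mnm_lepP.
case: ifP => // le; rewrite hf; last by apply: leq_trans hm; apply: mdeg_le_mnm.
rewrite -hg; last by apply: leq_trans hm; apply: mdeg_le_mnm; apply: lem_subr.
congr (_ * g _); apply: functional_extensionality => i; by rewrite mnmBE.
Qed.

Lemma corr_ext n N (f : ps T n) p q : corr N f p -> eqN N p q -> corr N f q.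
Proof. by move=> h e m hm; rewrite h // e. Qed.

Lemma corr_eqN n N (f : ps T n) p q : corr N f p -> corr N f q -> eqN N p q.
Proof. by move=> h1 h2 m hm; rewrite -h1 // h2. Qed.

Lemma corr_one n N : corr N (ps_one n) (1 : {mpoly T[n]}).
Proof.
move=> m _; rewrite mcoeff1 /ps_one.
have -> : [forall i, m i == 0%N] = (m == 0%MM).
  apply/forallP/eqP => [h|-> i]; last by rewrite mnm0E.
  by apply/mnmP => i; rewrite mnm0E; apply/eqP.
by case: eqP.
Qed.

Lemma corr_zero n N : corr N (ps_zero n) (0 : {mpoly T[n]}).
Proof. by move=> m _; rewrite mcoeff0. Qed.

Lemma corr_add n N (f g : ps T n) p q :
  corr N f p -> corr N g q -> corr N (ps_add f g) (p + q).
Proof. by move=> hf hg m hm; rewrite mcoeffD /ps_add hf ?hg. Qed.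

Lemma corr_opp n N (f : ps T n) p : corr N f p -> corr N (ps_opp f) (- p).
Proof. by move=> hf m hm; rewrite mcoeffN /ps_opp hf. Qed.

Lemma corr_exp n N (f : ps T n) p k : corr N f p -> corr N (ps_exp f k) (p ^+ k).
Proof.
move=> hf; elim: k => [|k IH]; first by rewrite expr0; exact: corr_one.
by rewrite exprS; apply: corr_mul.
Qed.

Lemma corr_prodexp k n N (g : 'I_k -> ps T n) (q : 'I_k -> {mpoly T[n]}) (e : mon k) :
  (forall i, corr N (g i) (q i)) ->
  corr N (ps_prodexp g e) (\prod_(i < k) q i ^+ e i).
Proof.
move=> hg; rewrite /ps_prodexp.
apply: (big_ind2 (fun a b => corr N a b)); first exact: corr_one.
  by move=> ? ? ? ? ? ?; apply: corr_mul.
by move=> i _; apply: corr_exp.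
Qed.

Lemma ps_ext n (f g : ps T n) : (forall m : 'X_{1..n}, f (fun i => m i) = g (fun i => m i)) -> f = g.
Proof.
move=> h; apply: functional_extensionality => m.
by rewrite -(fun_toM m) h.
Qed.

Lemma ps_eq_corr n (f g : ps T n) :
  (forall N, exists p, corr N f p /\ corr N g p) -> f = g.
Proof.
move=> h; apply: ps_ext => m; have [p [hf hg]] := h (mdeg m).
by rewrite hf // hg.
Qed.

Definition vge n d (p : {mpoly T[n]}) := forall m : 'X_{1..n}, (mdeg m < d)%N -> p@_m = 0.

Lemma vge_mul n a b (p q : {mpoly T[n]}) : vge a p -> vge b q -> vge (a + b) (p * q).
Proof.
move=> hp hq m hm; rewrite mulE; apply: big1 => k hk.
have : (mdeg k + mdeg (m - k) = mdeg m)%N by rewrite -mdegD addmC submK.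
move=> E; case: (ltnP (mdeg k) a) => ha; first by rewrite hp ?mul0r.
rewrite hq ?mulr0 //; rewrite -(ltn_add2l (mdeg k)) E.
by apply: (leq_trans hm); rewrite leq_add2r.
Qed.

Lemma vge_one n (p : {mpoly T[n]}) : vge 0 p.
Proof. by []. Qed.

Lemma vge_exp n a (p : {mpoly T[n]}) j : vge a p -> vge (a * j) (p ^+ j).
Proof.
move=> h; elim: j => [|j IH]; first by rewrite muln0.
by rewrite exprS mulnS; apply: vge_mul.
Qed.

Lemma vge_zc n (p : {mpoly T[n]}) : p@_0 = 0 -> vge 1 p.
Proof.
move=> h m; rewrite ltnS leqn0 mdeg_eq0 => /eqP ->; exact: h.
Qed.

Lemma vge_prod k n (q : 'I_k -> {mpoly T[n]}) (e : mon k) :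
  (forall i, (q i)@_0 = 0) -> vge (Defs.mdeg e) (\prod_(i < k) q i ^+ e i).
Proof.
move=> hq; rewrite /Defs.mdeg.
apply: (big_ind2 (fun a b => vge a b)); first exact: vge_one.
  by move=> ? ? ? ? ? ?; apply: vge_mul.
by move=> i _; have := @vge_exp _ 1 _ (e i) (vge_zc (hq i)); rewrite mul1n.
Qed.

Lemma vge_le n a b (p : {mpoly T[n]}) : (b <= a)%N -> vge a p -> vge b p.
Proof. by move=> le h m hm; apply: h; apply: leq_trans le. Qed.

End Bridge.

Lemma sum_bm_widen (V : nmodType) k M N (F : mon k -> V) :
  (M <= N)%N -> (forall e, (M < Defs.mdeg e)%N -> F e = 0) ->
  \sum_(b : 'X_{1..k < M.+1}) F (fun i => b i) =
  \sum_(b : 'X_{1..k < N.+1}) F (fun i => b i).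
Proof.
move=> MN F0.
have hP : forall b : 'X_{1..k < M.+1}, (mdeg b < N.+1)%N.
  by move=> b; apply: leq_trans (bmdeg b) _; rewrite ltnS.
have b0P : (mdeg (0%MM : 'X_{1..k}) < M.+1)%N by rewrite mdeg0.
pose b0 : 'X_{1..k < M.+1} := BMultinom b0P.
pose h (b : 'X_{1..k < M.+1}) : 'X_{1..k < N.+1} := BMultinom (hP b).
pose h' (b : 'X_{1..k < N.+1}) : 'X_{1..k < M.+1} := insubd b0 (val b).
rewrite [RHS](bigID (fun b : 'X_{1..k < N.+1} => (mdeg b <= M)%N)) /=.
rewrite [X in _ + X]big1 ?addr0; last first.
  by move=> b; rewrite -ltnNge => lt; apply: F0; rewrite mdeg_fun.
rewrite (reindex_onto h h'); last first.
  move=> b hb; apply: val_inj; rewrite /= /h' insubdK //.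

symmetry; apply: eq_bigl => b /=.
have -> : h' (h b) = b.
  by apply: val_inj; rewrite /h' insubdK //= -topredE /= bmdeg.
by rewrite eqxx andbT -ltnS bmdeg.
Qed.

Section Comp.
Variable T : comNzRingType.

Lemma comp_sum k n (I : Type) (r : seq I) (P : pred I) (F : I -> {mpoly T[k]}) (lq : k.-tuple {mpoly T[n]}) :
  (\sum_(i <- r | P i) F i) \mPo lq = \sum_(i <- r | P i) (F i \mPo lq).
Proof. exact: raddf_sum. Qed.

Lemma comp_Tr k n N (f : ps T k) (q : 'I_k -> {mpoly T[n]}) m :
  (Tr N f \mPo [tuple q i | i < k])@_m =
  \sum_(b : 'X_{1..k < N.+1}) f (fun i => b i) * (\prod_(i < k) q i ^+ b i)@_m.
Proof.
rewrite /Tr comp_sum mcoeff_sum; apply: eq_bigr => b _.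
rewrite comp_mpolyZ comp_mpolyX mcoeffZ; congr (_ * _@__).
by apply: eq_bigr => i _; rewrite tnth_mktuple.
Qed.

Lemma SubstM k n N (f : ps T k) (g : 'I_k -> ps T n) (q : 'I_k -> {mpoly T[n]}) :
  (forall i, corr N (g i) (q i)) -> (forall i, (q i)@_0 = 0) ->
  corr N (ps_subst f g) (Tr N f \mPo [tuple q i | i < k]).
Proof.
move=> hg hq m hm; rewrite /ps_subst comp_Tr.
under eq_bigr do rewrite (corr_prodexp _ hg hm).
rewrite (sum_ffun_bm (F := fun e => f e * (\prod_(i < k) q i ^+ e i)@_m)); last first.
  move=> e lt; rewrite (vge_prod (e:=e) hq) ?mulr0 //.
  by rewrite -mdeg_fun.
apply: (sum_bm_widen (F := fun e => f e * (\prod_(i < k) q i ^+ e i)@_m)).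
  by rewrite mdeg_fun.
move=> e lt; rewrite (vge_prod (e:=e) hq) ?mulr0 //.
by rewrite -mdeg_fun.
Qed.

Lemma eqN_refl n N (p : {mpoly T[n]}) : eqN N p p.
Proof. by []. Qed.

Lemma eqN_exp n N (p q : {mpoly T[n]}) j : eqN N p q -> eqN N (p ^+ j) (q ^+ j).
Proof.
move=> h; elim: j => [|j IH]; first by rewrite !expr0.
by rewrite !exprS; apply: eqN_mul.
Qed.

Lemma eqN_prod k n N (a b : 'I_k -> {mpoly T[n]}) (e : 'I_k -> nat) :
  (forall i, eqN N (a i) (b i)) ->
  eqN N (\prod_(i < k) a i ^+ e i) (\prod_(i < k) b i ^+ e i).
Proof.
move=> h; apply: (big_ind2 (fun x y => eqN N x y)) => //.
  by move=> ? ? ? ? ? ?; apply: eqN_mul.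
by move=> i _; apply: eqN_exp.
Qed.

Lemma eqN_comp_r k n N (p : {mpoly T[k]}) (q q' : 'I_k -> {mpoly T[n]}) :
  (forall i, eqN N (q i) (q' i)) ->
  eqN N (p \mPo [tuple q i | i < k]) (p \mPo [tuple q' i | i < k]).
Proof.
move=> h m hm; rewrite !comp_mpolyE !mcoeff_sum; apply: eq_bigr => mm _.
rewrite !mcoeffZ; congr (_ * _).
under eq_bigr do rewrite tnth_mktuple.
under [in RHS]eq_bigr do rewrite tnth_mktuple.
by apply: eqN_prod.
Qed.

Lemma comp_zero_low k n N (r : {mpoly T[k]}) (q : 'I_k -> {mpoly T[n]}) :
  eqN N r 0 -> (forall i, (q i)@_0 = 0) -> eqN N (r \mPo [tuple q i | i < k]) 0.
Proof.
move=> hr hq m hm; rewrite mcoeff0 comp_mpolyE mcoeff_sum big1_seq //.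
move=> mm /andP[_ hin]; rewrite mcoeffZ.
have lt : (N < mdeg mm)%N.
  rewrite ltnNge; apply/negP => le; move: hin; rewrite mcoeff_msupp hr ?mcoeff0 ?eqxx //.
under eq_bigr do rewrite tnth_mktuple.
rewrite (vge_prod (e:=fun i => mm i) hq) ?mulr0 //.
by rewrite mdeg_fun; apply: leq_ltn_trans lt.
Qed.

Lemma eqN_comp_l k n N (p p' : {mpoly T[k]}) (q : 'I_k -> {mpoly T[n]}) :
  eqN N p p' -> (forall i, (q i)@_0 = 0) ->
  eqN N (p \mPo [tuple q i | i < k]) (p' \mPo [tuple q i | i < k]).
Proof.
move=> h hq m hm; apply/eqP; rewrite -subr_eq0 -mcoeffB -comp_mpolyB.
rewrite (comp_zero_low (N := N)) ?mcoeff0 //.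
by move=> mm hmm; rewrite mcoeffB mcoeff0 h // subrr.
Qed.

Lemma comp_assoc k n j (p : {mpoly T[k]}) (q : 'I_k -> {mpoly T[n]}) (r : 'I_n -> {mpoly T[j]}) :
  (p \mPo [tuple q i | i < k]) \mPo [tuple r i | i < n] =
  p \mPo [tuple (q i \mPo [tuple r i | i < n]) | i < k].
Proof.
rewrite (comp_mpolyE p [tuple q i | i < k]) (comp_mpolyE p [tuple (q i \mPo [tuple r i | i < n]) | i < k]) comp_sum; apply: eq_bigr => mm _.
rewrite comp_mpolyZ; congr (_ *: _).
rewrite rmorph_prod /=; apply: eq_bigr => i _.
by rewrite rmorphXn /= !tnth_mktuple.
Qed.

Lemma comp_zc k n (p : {mpoly T[k]}) (q : 'I_k -> {mpoly T[n]}) :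
  p@_0 = 0 -> (forall i, (q i)@_0 = 0) -> (p \mPo [tuple q i | i < k])@_0 = 0.
Proof.
move=> hp hq; rewrite (comp_zero_low (N := 0)) ?mcoeff0 // ?mdeg0 //.
by move=> m; rewrite leqn0 mdeg_eq0 => /eqP ->; rewrite hp mcoeff0.
Qed.

End Comp.

Lemma fun0 n : (fun i : 'I_n => (0%MM : 'X_{1..n}) i) = (fun _ => 0%N).
Proof. by apply: functional_extensionality => i; rewrite mnm0E. Qed.

Section NZ.
Variable T : comNzRingType.

Lemma Tr_at0 n N (f : ps T n) : (Tr N f)@_0 = f (fun _ => 0%N).
Proof. by rewrite Tr_coef mdeg0 fun0. Qed.

Lemma subst_zc_nz k n (f : ps T k) (g : 'I_k -> ps T n) :
  (forall i, zero_const (g i)) -> ps_subst f g (fun _ => 0%N) = f (fun _ => 0%N).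
Proof.
move=> hg.
have hz : forall i, (Tr 0%N (g i))@_0 = 0 by move=> i; rewrite Tr_at0; apply: hg.
have := SubstM f (fun i => corr_Tr (N:=0%N) (g i)) hz (m := 0%MM).
rewrite mdeg0 fun0 => -> //.
rewrite (@eqN_comp_l _ _ _ 0%N _ (f (fun _ => 0%N))%:MP _ _ hz) ?mdeg0 //.
  by rewrite comp_mpolyC mcoeffC eqxx mulr1.
move=> m; rewrite leqn0 mdeg_eq0 => /eqP ->.
by rewrite Tr_at0 mcoeffC eqxx mulr1.
Qed.

Lemma subst_assoc_nz k n j (f : ps T k) (g : 'I_k -> ps T n) (h : 'I_n -> ps T j) :
  (forall i, zero_const (g i)) -> (forall i, zero_const (h i)) ->
  ps_subst (ps_subst f g) h = ps_subst f (fun i => ps_subst (g i) h).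
Proof.
move=> hg hh; apply: ps_eq_corr => N.
have zg : forall i, (Tr N (g i))@_0 = 0 by move=> i; rewrite Tr_at0; apply: hg.
have zh : forall i, (Tr N (h i))@_0 = 0 by move=> i; rewrite Tr_at0; apply: hh.
have zgh : forall i, (Tr N (ps_subst (g i) h))@_0 = 0.
  by move=> i; rewrite Tr_at0 subst_zc_nz //; apply: hg.
exists ((Tr N f \mPo [tuple Tr N (g i) | i < k]) \mPo [tuple Tr N (h i) | i < n]).
split.
  apply: corr_ext (SubstM _ (fun i => corr_Tr (N:=N) (h i)) zh) _.
  apply: eqN_comp_l => //.
  exact: corr_eqN (corr_Tr (N:=N) _) (SubstM _ (fun i => corr_Tr (N:=N) (g i)) zg).
rewrite comp_assoc.
apply: corr_ext (SubstM _ (fun i => corr_Tr (N:=N) (ps_subst (g i) h)) zgh) _.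
apply: eqN_comp_r => i.
exact: corr_eqN (corr_Tr (N:=N) _) (SubstM _ (fun i => corr_Tr (N:=N) (h i)) zh).
Qed.

Lemma Tr_var n N (i : 'I_n) : (0 < N)%N -> eqN N (Tr N (ps_var T i)) 'X_i.
Proof.
move=> N0 m hm; rewrite Tr_coef hm mcoeffX /ps_var.
case: forallP => [h|h].
  rewrite (_ : U_(i)%MM = m) ?eqxx //; apply/mnmP => j; rewrite mnm1E.
  by rewrite (eqP (h j)) eq_sym.
case: eqP => // E; exfalso; apply: h => j; move/mnmP: E => /(_ j); rewrite mnm1E => <-; by rewrite [i == j]eq_sym.
Qed.

Lemma var_zc n (i : 'I_n) : zero_const (ps_var T i).
Proof.
rewrite /zero_const /ps_var; case: ifP => // /forallP /(_ i).
by rewrite eqxx.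
Qed.

Lemma subst_varl_nz k n (i : 'I_k) (g : 'I_k -> ps T n) :
  (forall i, zero_const (g i)) -> ps_subst (ps_var T i) g = g i.
Proof.
move=> hg; apply: ps_eq_corr => N; exists (Tr N (g i)); split; last exact: corr_Tr.
have zg : forall i, (Tr N (g i))@_0 = 0 by move=> i'; rewrite Tr_at0; apply: hg.
apply: corr_ext (SubstM _ (fun i => corr_Tr (N:=N) (g i)) zg) _.
case: N zg => [|N] zg.
  move=> m; rewrite leqn0 mdeg_eq0 => /eqP ->; rewrite zg.
  by apply: comp_zc => //; rewrite Tr_at0; apply: var_zc.
rewrite (_ : Tr N.+1 (g i) = 'X_i \mPo [tuple Tr N.+1 (g i) | i < k]).
  by apply: eqN_comp_l => //; apply: Tr_var.
by rewrite comp_mpolyXU -tnth_nth tnth_mktuple.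
Qed.

Lemma subst_varr_nz n (f : ps T n) : ps_subst f (@ps_var T n) = f.
Proof.
apply: ps_eq_corr => N; exists (Tr N f); split; last exact: corr_Tr.
have z : forall i : 'I_n, (Tr N (ps_var T i))@_0 = 0 by move=> i; rewrite Tr_at0; apply: var_zc.
apply: corr_ext (SubstM _ (fun i => corr_Tr (N:=N) (ps_var T i)) z) _.
case: N z => [|N] z.
  move=> m; rewrite leqn0 mdeg_eq0 => /eqP ->.
  rewrite (@eqN_comp_l _ _ _ 0%N _ (f (fun _ => 0%N))%:MP _ _ z) ?mdeg0 //.
    by rewrite comp_mpolyC mcoeffC Tr_at0 eqxx mulr1.
  move=> m2; rewrite leqn0 mdeg_eq0 => /eqP ->.
  by rewrite Tr_at0 mcoeffC eqxx mulr1.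
rewrite -[X in eqN _ _ X](comp_mpoly_id (Tr N.+1 f)).
by apply: eqN_comp_r => i; apply: Tr_var.
Qed.

Lemma ps_mul1_nz n (f : ps T n) : ps_mul (ps_one n) f = f.
Proof.
apply: ps_eq_corr => N; exists (Tr N f); split; last exact: corr_Tr.
by rewrite -[Tr N f]mul1r; apply: corr_mul; [apply: corr_one | apply: corr_Tr].
Qed.

Lemma ps_mulC_nz n (f g : ps T n) : ps_mul f g = ps_mul g f.
Proof.
apply: ps_eq_corr => N; exists (Tr N f * Tr N g); split.
  by apply: corr_mul; apply: corr_Tr.
by rewrite mulrC; apply: corr_mul; apply: corr_Tr.
Qed.

Lemma ps_mulA_nz n (f g h : ps T n) : ps_mul f (ps_mul g h) = ps_mul (ps_mul f g) h.
Proof.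
apply: ps_eq_corr => N; exists (Tr N f * (Tr N g * Tr N h)); split.
  by apply: corr_mul; [|apply: corr_mul]; apply: corr_Tr.
by rewrite mulrA; apply: corr_mul; [apply: corr_mul|]; apply: corr_Tr.
Qed.

End NZ.

Lemma ps_triv (T : comPzRingType) : (1 : T) = 0 -> forall n (f g : ps T n), f = g.
Proof.
move=> h n f g; apply: functional_extensionality => m.
by rewrite -[f m]mulr1 -[g m]mulr1 h !mulr0.
Qed.

Ltac nzT T := let nz := fresh "nz" in
  case: (eqVneq (1 : T) 0) => [/ps_triv ? | nz]; [by [] | ];
  pose TT := HB.pack_for comNzRingType T (GRing.PzSemiRing_isNonZero.Build T nz).

Section PZ.
Variable T : comPzRingType.

Lemma subst_zc k n (f : ps T k) (g : 'I_k -> ps T n) :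
  (forall i, zero_const (g i)) -> ps_subst f g (fun _ => 0%N) = f (fun _ => 0%N).
Proof.
case: (eqVneq (1 : T) 0) => [h|nz].
  by move=> _; rewrite -[LHS]mulr1 -[RHS]mulr1 h !mulr0.
exact: (@subst_zc_nz (HB.pack_for comNzRingType T (GRing.PzSemiRing_isNonZero.Build T nz))).
Qed.

Lemma subst_assoc k n j (f : ps T k) (g : 'I_k -> ps T n) (h : 'I_n -> ps T j) :
  (forall i, zero_const (g i)) -> (forall i, zero_const (h i)) ->
  ps_subst (ps_subst f g) h = ps_subst f (fun i => ps_subst (g i) h).
Proof.
case: (eqVneq (1 : T) 0) => [/ps_triv h1|nz]; first by move=> *; apply: h1.
exact: (@subst_assoc_nz (HB.pack_for comNzRingType T (GRing.PzSemiRing_isNonZero.Build T nz))).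
Qed.

Lemma subst_varl k n (i : 'I_k) (g : 'I_k -> ps T n) :
  (forall i, zero_const (g i)) -> ps_subst (ps_var T i) g = g i.
Proof.
case: (eqVneq (1 : T) 0) => [/ps_triv h1|nz]; first by move=> *; apply: h1.
exact: (@subst_varl_nz (HB.pack_for comNzRingType T (GRing.PzSemiRing_isNonZero.Build T nz))).
Qed.

Lemma subst_varr n (f : ps T n) : ps_subst f (@ps_var T n) = f.
Proof.
case: (eqVneq (1 : T) 0) => [/ps_triv h1|nz]; first by apply: h1.
exact: (@subst_varr_nz (HB.pack_for comNzRingType T (GRing.PzSemiRing_isNonZero.Build T nz))).
Qed.

Lemma ps_mul1 n (f : ps T n) : ps_mul (ps_one n) f = f.
Proof.
case: (eqVneq (1 : T) 0) => [/ps_triv h1|nz]; first by apply: h1.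
exact: (@ps_mul1_nz (HB.pack_for comNzRingType T (GRing.PzSemiRing_isNonZero.Build T nz))).
Qed.

Lemma ps_mulC n (f g : ps T n) : ps_mul f g = ps_mul g f.
Proof.
case: (eqVneq (1 : T) 0) => [/ps_triv h1|nz]; first by apply: h1.
exact: (@ps_mulC_nz (HB.pack_for comNzRingType T (GRing.PzSemiRing_isNonZero.Build T nz))).
Qed.

Lemma var_zc' n (i : 'I_n) : zero_const (ps_var T i).
Proof.
rewrite /zero_const /ps_var; case: ifP => // /forallP /(_ i).
by rewrite eqxx.
Qed.

End PZ.

Section Direct.
Variable T : comPzRingType.

Lemma subst_add k n (f f' : ps T k) (g : 'I_k -> ps T n) :
  ps_subst (ps_add f f') g = ps_add (ps_subst f g) (ps_subst f' g).
Proof.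
apply: functional_extensionality => m; rewrite /ps_subst /ps_add -big_split.
by apply: eq_bigr => e _; rewrite mulrDl.
Qed.

Lemma subst_opp k n (f : ps T k) (g : 'I_k -> ps T n) :
  ps_subst (ps_opp f) g = ps_opp (ps_subst f g).
Proof.
apply: functional_extensionality => m; rewrite /ps_subst /ps_opp -sumrN.
by apply: eq_bigr => e _; rewrite mulNr.
Qed.

Lemma subst_zero k n (g : 'I_k -> ps T n) : ps_subst (ps_zero k) g = ps_zero n.
Proof.
apply: functional_extensionality => m; rewrite /ps_subst /ps_zero.
by apply: big1 => e _; rewrite mul0r.
Qed.

Lemma zc_zero n : zero_const (ps_zero (T := T) n).
Proof. by []. Qed.

Lemma vec2_fun (A B : Type) (F : A -> B) (a b : A) :
  (fun i : 'I_2 => F (if i == ord0 then a else b)) = (fun i => if i == ord0 then F a else F b).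
Proof. by apply: functional_extensionality => i; case: ifP. Qed.

Lemma vec2_zc n (a b : ps T n) : zero_const a -> zero_const b ->
  forall i, zero_const (vec2 a b i).
Proof. by move=> ha hb i; rewrite /vec2; case: ifP. Qed.

Lemma ps_mul0l n (f : ps T n) : ps_mul (ps_zero n) f = ps_zero n.
Proof.
apply: functional_extensionality => m; rewrite /ps_mul; apply: big1 => a _.
by rewrite /ps_zero mul0r.
Qed.

Lemma ps_mul0r n (f : ps T n) : ps_mul f (ps_zero n) = ps_zero n.
Proof.
apply: functional_extensionality => m; rewrite /ps_mul; apply: big1 => a _.
by rewrite /ps_zero mulr0.
Qed.

End Direct.

Definition rhom (T T' : comPzRingType) (h : T -> T') :=
  [/\ h 0 = 0, h 1 = 1, forall x y, h (x + y) = h x + h y &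
      forall x y, h (x * y) = h x * h y].

Lemma rhom_rmorph (T T' : comPzRingType) (h : {rmorphism T -> T'}) : rhom h.
Proof. by split; [exact: rmorph0 | exact: rmorph1 | exact: rmorphD | exact: rmorphM]. Qed.

Lemma rhom_comp (T T' T'' : comPzRingType) (h : T -> T') (h' : T' -> T'') :
  rhom h -> rhom h' -> rhom (fun x => h' (h x)).
Proof.
case=> a b c d [a' b' c' d']; split=> [|||x y]; first by rewrite a a'.
- by rewrite b b'.
- by move=> x y; rewrite c c'.
- by rewrite d d'.
Qed.

Set Default Proof Using "All".
Section Map.
Variables (T T' : comPzRingType) (h : T -> T').
Hypothesis hh : rhom h.

Lemma hom0 : h 0 = 0. Proof. by case: hh. Qed.
Lemma hom1 : h 1 = 1. Proof. by case: hh. Qed.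
Lemma homD x y : h (x + y) = h x + h y. Proof. by case: hh. Qed.
Lemma homM x y : h (x * y) = h x * h y. Proof. by case: hh. Qed.
Lemma homN x : h (- x) = - h x.
Proof. by apply/eqP; rewrite -addr_eq0 -homD addNr hom0. Qed.
Lemma hom_sum (I : Type) (r : seq I) (P : pred I) (F : I -> T) :
  h (\sum_(i <- r | P i) F i) = \sum_(i <- r | P i) h (F i).
Proof. exact: (big_morph h homD hom0). Qed.

Lemma map_zero n : ps_map h (ps_zero n) = ps_zero n.
Proof. by apply: functional_extensionality => m; rewrite /ps_map /ps_zero hom0. Qed.

Lemma map_one n : ps_map h (ps_one n) = ps_one n.
Proof.
apply: functional_extensionality => m; rewrite /ps_map /ps_one.
by case: ifP; rewrite ?hom0 ?hom1.
Qed.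

Lemma map_var n (i : 'I_n) : ps_map h (ps_var T i) = ps_var T' i.
Proof.
apply: functional_extensionality => m; rewrite /ps_map /ps_var.
by case: ifP; rewrite ?hom0 ?hom1.
Qed.

Lemma map_add n (f g : ps T n) : ps_map h (ps_add f g) = ps_add (ps_map h f) (ps_map h g).
Proof. by apply: functional_extensionality => m; rewrite /ps_map /ps_add homD. Qed.

Lemma map_opp n (f : ps T n) : ps_map h (ps_opp f) = ps_opp (ps_map h f).
Proof. by apply: functional_extensionality => m; rewrite /ps_map /ps_opp homN. Qed.

Lemma map_mul n (f g : ps T n) : ps_map h (ps_mul f g) = ps_mul (ps_map h f) (ps_map h g).
Proof.
apply: functional_extensionality => m; rewrite /ps_map /ps_mul hom_sum.
by apply: eq_bigr => a _; rewrite homM.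
Qed.

Lemma map_exp n (f : ps T n) k : ps_map h (ps_exp f k) = ps_exp (ps_map h f) k.
Proof.
elim: k => [|k IH]; first exact: map_one.
by rewrite /= map_mul -/(ps_exp f k) IH.
Qed.

Lemma map_prodexp k n (g : 'I_k -> ps T n) e :
  ps_map h (ps_prodexp g e) = ps_prodexp (fun i => ps_map h (g i)) e.
Proof.
rewrite /ps_prodexp (big_morph (@ps_map _ _ h n) (@map_mul n) (map_one n)).
by apply: eq_bigr => i _; rewrite map_exp.
Qed.

Lemma map_subst k n (f : ps T k) (g : 'I_k -> ps T n) :
  ps_map h (ps_subst f g) = ps_subst (ps_map h f) (fun i => ps_map h (g i)).
Proof.
apply: functional_extensionality => m; rewrite {1}/ps_map /ps_subst hom_sum.
apply: eq_bigr => e _; rewrite homM; congr (_ * _).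
by rewrite -map_prodexp.
Qed.

Lemma map_zc n (f : ps T n) : zero_const f -> zero_const (ps_map h f).
Proof. by rewrite /zero_const /ps_map => ->; rewrite hom0. Qed.

Lemma map_vec2 n (a b : ps T n) :
  (fun i => ps_map h (vec2 a b i)) = vec2 (ps_map h a) (ps_map h b).
Proof. exact: vec2_fun. Qed.

Lemma map_addG (G : ps T 2) n (a b : ps T n) :
  ps_map h (addG G a b) = addG (ps_map h G) (ps_map h a) (ps_map h b).
Proof. by rewrite /addG map_subst map_vec2. Qed.

Lemma map_negG (iG : ps T 1) n (a : ps T n) :
  ps_map h (negG iG a) = negG (ps_map h iG) (ps_map h a).
Proof. by rewrite /negG map_subst. Qed.

Lemma map_face (F : ps T 2) n i :
  (fun j => ps_map h (face F n i j)) = face (ps_map h F) n i.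
Proof.
apply: functional_extensionality => j; rewrite /face.
case: ifP => _; first exact: map_var.
case: ifP => _; last exact: map_var.
by rewrite map_subst map_vec2 !map_var.
Qed.

Lemma map_delta (F G : ps T 2) (iG : ps T 1) n (f : ps T n) :
  ps_map h (delta F G iG f) = delta (ps_map h F) (ps_map h G) (ps_map h iG) (ps_map h f).
Proof.
rewrite /delta (big_morph (@ps_map _ _ h n.+1) (@map_addG G n.+1) (map_zero n.+1)).
apply: eq_bigr => i _; case: ifP => _.
  by rewrite map_negG map_subst map_face.
by rewrite map_subst map_face.
Qed.

End Map.

Section VecLemmas.
Variable T : comPzRingType.

Lemma subst_vec2 k n (a b : ps T k) (h : 'I_k -> ps T n) :
  (fun i => ps_subst (vec2 a b i) h) = vec2 (ps_subst a h) (ps_subst b h).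
Proof. exact: (vec2_fun (fun z => ps_subst z h) a b). Qed.

Lemma vec2_0 n (a b : ps T n) : vec2 a b ord0 = a.
Proof. by []. Qed.
Lemma vec2_1 n (a b : ps T n) : vec2 a b (1 : 'I_2) = b.
Proof. by []. Qed.

Definition vec3 n (a b c : ps T n) : 'I_3 -> ps T n :=
  fun i => if nat_of_ord i == 0%N then a else if nat_of_ord i == 1%N then b else c.

Lemma vec3_zc n (a b c : ps T n) : zero_const a -> zero_const b -> zero_const c ->
  forall i, zero_const (vec3 a b c i).
Proof. by move=> ha hb hc i; rewrite /vec3; case: ifP => _ //; case: ifP. Qed.

Lemma fgl_zc (G : ps T 2) : is_fgl G -> zero_const G.
Proof.
case=> h1 _ _ _; have := congr1 (fun f => f (fun _ => 0%N)) h1 => /=.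
rewrite subst_zc; last by apply: vec2_zc; [apply: var_zc' | apply: zc_zero].
by rewrite /zero_const => ->; apply: var_zc'.
Qed.

End VecLemmas.

Set Default Proof Using "All".
Section Group.
Variables (T : comPzRingType) (G : ps T 2) (iG : ps T 1).
Hypotheses (hG : is_fgl G) (hiG : is_fgl_inv G iG).

Local Notation add := (addG G).
Local Notation neg := (negG iG).
Local Notation zc := zero_const.

Lemma G_zc : zc G. Proof. exact: fgl_zc. Qed.
Lemma iG_zc : zc iG. Proof. by case: hiG. Qed.

Lemma add_zc n (a b : ps T n) : zc a -> zc b -> zc (add a b).
Proof.
move=> ha hb; rewrite /zero_const /addG subst_zc; first exact: G_zc.
exact: vec2_zc.
Qed.

Lemma neg_zc n (a : ps T n) : zc a -> zc (neg a).
Proof. by move=> ha; rewrite /zero_const /negG subst_zc //; exact: iG_zc. Qed.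

Lemma gadd0r n (a : ps T n) : zc a -> add (ps_zero n) a = a.
Proof.
move=> ha; case: hG => _ h2 _ _.
have := congr1 (fun f => ps_subst f (fun _ : 'I_1 => a)) h2 => /=.
rewrite subst_assoc //; last by apply: vec2_zc; [apply: zc_zero|apply: var_zc'].
by rewrite subst_vec2 subst_zero !subst_varl.
Qed.

Lemma gaddr0 n (a : ps T n) : zc a -> add a (ps_zero n) = a.
Proof.
move=> ha; case: hG => h1 _ _ _.
have := congr1 (fun f => ps_subst f (fun _ : 'I_1 => a)) h1 => /=.
rewrite subst_assoc //; last by apply: vec2_zc; [apply: var_zc'|apply: zc_zero].
by rewrite subst_vec2 subst_zero !subst_varl.
Qed.

Lemma gaddC n (a b : ps T n) : zc a -> zc b -> add a b = add b a.
Proof.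
move=> ha hb; case: hG => _ _ _ h4.
have := congr1 (fun f => ps_subst f (vec2 a b)) h4 => /=.
rewrite subst_assoc; last 2 first.
- by apply: vec2_zc; apply: var_zc'.
- exact: vec2_zc.
rewrite subst_vec2 !subst_varl; try exact: vec2_zc.
by rewrite /addG => <-.
Qed.

Lemma gaddA n (a b c : ps T n) : zc a -> zc b -> zc c ->
  add (add a b) c = add a (add b c).
Proof.
move=> ha hb hc; case: hG => _ _ h3 _.
have zv := vec3_zc ha hb hc.
have zx : forall i : 'I_3, zc (ps_var T i) by move=> i; apply: var_zc'.
have zGx : forall i j : 'I_3, zc (ps_subst G (vec2 (ps_var T i) (ps_var T j))).
  by move=> i j; rewrite /zero_const subst_zc; [apply: G_zc|apply: vec2_zc].
have := congr1 (fun f => ps_subst f (vec3 a b c)) h3 => /=.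
rewrite !subst_assoc //; try by apply: vec2_zc.
rewrite !subst_vec2 !subst_assoc //; try by apply: vec2_zc.
by rewrite !subst_vec2 !subst_varl.
Qed.

Lemma gaddrN n (a : ps T n) : zc a -> add a (neg a) = ps_zero n.
Proof.
move=> ha; case: hiG => _ h.
have := congr1 (fun f => ps_subst f (fun _ : 'I_1 => a)) h => /=.
rewrite subst_assoc //; last by apply: vec2_zc; [apply: var_zc'|apply: iG_zc].
by rewrite subst_vec2 subst_varl // subst_zero.
Qed.

Lemma gaddNr n (a : ps T n) : zc a -> add (neg a) a = ps_zero n.
Proof. by move=> ha; rewrite gaddC ?gaddrN //; apply: neg_zc. Qed.

Lemma subst_addG k n (a b : ps T k) (d : 'I_k -> ps T n) : (forall i, zc (d i)) ->
  zc a -> zc b -> ps_subst (add a b) d = add (ps_subst a d) (ps_subst b d).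
Proof.
move=> hd ha hb; rewrite /addG subst_assoc //; last exact: vec2_zc.
by rewrite subst_vec2.
Qed.

Lemma subst_negG k n (a : ps T k) (d : 'I_k -> ps T n) : (forall i, zc (d i)) ->
  zc a -> ps_subst (neg a) d = neg (ps_subst a d).
Proof. by move=> hd ha; rewrite /negG subst_assoc. Qed.

Lemma neg_unique n (a b : ps T n) : zc a -> zc b -> add a b = ps_zero n -> b = neg a.
Proof.
move=> ha hb e.
have zn := neg_zc ha.
by rewrite -(gadd0r hb) -(gaddNr ha) gaddA // e gaddr0.
Qed.

Lemma add_cancel n (c a b : ps T n) : zc c -> zc a -> zc b -> add c a = add c b -> a = b.
Proof.
move=> hc ha hb e; have zn := neg_zc hc.
by rewrite -(gadd0r ha) -(gadd0r hb) -(gaddNr hc) !gaddA // e.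
Qed.

Lemma add_swap n (a b c d : ps T n) : zc a -> zc b -> zc c -> zc d ->
  add (add a b) (add c d) = add (add a c) (add b d).
Proof.
move=> ha hb hc hd.
have zcd := add_zc hc hd; have zbd := add_zc hb hd.
rewrite (gaddA ha hb zcd) -(gaddA hb hc hd) (gaddC hb hc) (gaddA hc hb hd).
by rewrite -(gaddA ha hc zbd).
Qed.

Lemma negD n (a b : ps T n) : zc a -> zc b -> neg (add a b) = add (neg a) (neg b).
Proof.
move=> ha hb; symmetry; apply: neg_unique; try by apply: add_zc; try apply: neg_zc.
by rewrite (add_swap ha hb (neg_zc ha) (neg_zc hb)) (gaddrN ha) (gaddrN hb) gaddr0.
Qed.

Lemma neg0 n : neg (ps_zero n) = ps_zero n.
Proof. by symmetry; apply: neg_unique => //; rewrite gaddr0. Qed.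

Lemma gaddKr n (a b : ps T n) : zc a -> zc b -> add a (add (neg a) b) = b.
Proof. by move=> ha hb; rewrite -(gaddA ha (neg_zc ha) hb) (gaddrN ha) gadd0r. Qed.

Lemma big_zc n k (F : 'I_k -> ps T n) : (forall i, zc (F i)) ->
  zc (\big[@addG T G n/ps_zero n]_(i < k) F i).
Proof.
move=> hF; apply: (big_ind (fun x => zc x)) => //; exact: add_zc.

Qed.

Lemma big_split_add n k (F H : 'I_k -> ps T n) : (forall i, zc (F i)) -> (forall i, zc (H i)) ->
  \big[@addG T G n/ps_zero n]_(i < k) add (F i) (H i) =
  add (\big[@addG T G n/ps_zero n]_(i < k) F i) (\big[@addG T G n/ps_zero n]_(i < k) H i).
Proof.
elim: k F H => [|k IH] F H hF hH.
  by rewrite !big_ord0 gaddr0.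
rewrite !big_ord_recl IH // add_swap //; by apply: big_zc.
Qed.

Lemma big_zero n k : \big[@addG T G n/ps_zero n]_(i < k) ps_zero n = ps_zero n.
Proof.
apply: (big_ind (fun x => x = ps_zero n)) => // x y -> ->.
by rewrite gaddr0.
Qed.

End Group.

Set Default Proof Using "All".
Section Delta.
Variables (T : comPzRingType) (F G : ps T 2) (iG : ps T 1).
Hypotheses (hF : is_fgl F) (hG : is_fgl G) (hiG : is_fgl_inv G iG).
Local Notation zc := zero_const.

Lemma face_zc n i j : zc (face F n i j).
Proof.
rewrite /face; case: ifP => _; first exact: var_zc'.
case: ifP => _; last exact: var_zc'.
rewrite /zero_const subst_zc; first exact: (fgl_zc hF).
by apply: vec2_zc; apply: var_zc'.
Qed.

Lemma term_zc n (f : ps T n) (i : nat) : zc f ->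
  zc (if odd i then negG iG (ps_subst f (face F n i)) else ps_subst f (face F n i)).
Proof.
move=> hf; have h1 : zc (ps_subst f (face F n i)).
  by rewrite /zero_const subst_zc //; exact: face_zc.
by case: ifP => _ //; apply: (neg_zc hG hiG).
Qed.

Lemma delta_zc n (f : ps T n) : zc f -> zc (delta F G iG f).
Proof. by move=> hf; rewrite /delta; apply: (big_zc hG hiG) => // i; apply: term_zc. Qed.

Lemma delta_add n (a b : ps T n) : zc a -> zc b ->
  delta F G iG (addG G a b) = addG G (delta F G iG a) (delta F G iG b).
Proof.
move=> ha hb; rewrite /delta -(big_split_add hG hiG) //; try by move=> i; apply: term_zc.
apply: eq_bigr => i _.
have hs : forall f : ps T n, zc f -> zc (ps_subst f (face F n i)).
  by move=> f hf; rewrite /zero_const subst_zc //; exact: face_zc.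
rewrite (subst_addG hG hiG) //; last exact: face_zc.
by case: ifP => _ //; rewrite (negD hG hiG) //; apply: hs.
Qed.

Lemma delta_zero n : delta F G iG (ps_zero n) = ps_zero n.+1.
Proof.
rewrite /delta; under eq_bigr do rewrite subst_zero.
rewrite (eq_bigr (fun _ => ps_zero n.+1)); first exact: (big_zero hG hiG).
by move=> i _; case: ifP => _ //; rewrite (neg0 hG hiG).
Qed.

End Delta.

Section Ga.
Variable S : comPzRingType.
Local Notation zc := zero_const.

Lemma ga_add n (a b : ps S n) : zc a -> zc b -> addG (ga_law S) a b = ps_add a b.
Proof.
move=> ha hb; rewrite /addG /ga_law subst_add !subst_varl //; exact: vec2_zc.
Qed.

Lemma ga_neg n (a : ps S n) : zc a -> negG (ga_inv S) a = ps_opp a.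
Proof. by move=> ha; rewrite /negG /ga_inv subst_opp subst_varl. Qed.

Lemma ps_addE n (a b : ps S n) m : ps_add a b m = a m + b m. Proof. by []. Qed.

Lemma ga_add' n (a b : ps S n) : zc a -> zc b ->
  ps_subst (ga_law S) (vec2 a b) = ps_add a b.
Proof. exact: ga_add. Qed.

Lemma ga_fgl : is_fgl (ga_law S).
Proof.
have zx1 : forall i : 'I_1, zc (ps_var S i) by move=> i; apply: var_zc'.
have zx2 : forall i : 'I_2, zc (ps_var S i) by move=> i; apply: var_zc'.
have zx3 : forall i : 'I_3, zc (ps_var S i) by move=> i; apply: var_zc'.
have za : forall n (a b : ps S n), zc a -> zc b -> zc (ps_add a b).
  by move=> n a b ha hb; rewrite /zero_const ps_addE ha hb addr0.
split.
- rewrite ga_add' //.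
  by apply: functional_extensionality => m; rewrite ps_addE /= addr0.
- rewrite ga_add' //.
  by apply: functional_extensionality => m; rewrite ps_addE /= add0r.
- rewrite !ga_add'; try by [apply: za | done].
  by apply: functional_extensionality => m; rewrite !ps_addE addrA.
- rewrite ga_add' //.
  by apply: functional_extensionality => m; rewrite !ps_addE /= addrC.
Qed.

Lemma ga_fgl_inv : is_fgl_inv (ga_law S) (ga_inv S).
Proof.
split; first by rewrite /zero_const /ga_inv /ps_opp var_zc' oppr0.
have zv1 : zc (ps_var S (ord0 : 'I_1)) by apply: var_zc'.
have zi : zc (ga_inv S) by rewrite /zero_const /ga_inv /ps_opp var_zc' oppr0.
rewrite ga_add' //.
by apply: functional_extensionality => m; rewrite ps_addE /= /ga_inv /ps_opp subrr.
Qed.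

End Ga.

Section FglMap.
Variables (T T' : comPzRingType) (h : T -> T').
Hypothesis hh : rhom h.

Lemma fgl_map (G : ps T 2) : is_fgl G -> is_fgl (ps_map h G).
Proof.
case=> h1 h2 h3 h4; split.
- by have := congr1 (@ps_map _ _ h 1) h1; rewrite (map_subst hh) (map_vec2 hh) !(map_var hh) (map_zero hh).
- by have := congr1 (@ps_map _ _ h 1) h2; rewrite (map_subst hh) (map_vec2 hh) !(map_var hh) (map_zero hh).
- have := congr1 (@ps_map _ _ h 3) h3.
  by rewrite !(map_subst hh) !(map_vec2 hh) !(map_subst hh) !(map_vec2 hh) !(map_var hh).
- by have := congr1 (@ps_map _ _ h 2) h4; rewrite (map_subst hh) (map_vec2 hh) !(map_var hh).
Qed.

Lemma fgl_inv_map (G : ps T 2) (iG : ps T 1) :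
  is_fgl_inv G iG -> is_fgl_inv (ps_map h G) (ps_map h iG).
Proof.
case=> h1 h2; split; first exact: (map_zc hh).
by have := congr1 (@ps_map _ _ h 1) h2; rewrite (map_subst hh) (map_vec2 hh) !(map_var hh) (map_zero hh).
Qed.
End FglMap.

Section Dual.
Variable S : comPzRingType.
Local Notation D := (dual S).
Local Notation zc := zero_const.

Definition mkD (a b : S) : D := (a, b).
Lemma addD (a b c d : S) : mkD a b + mkD c d = mkD (a + c) (b + d). Proof. by []. Qed.
Lemma mulD (a b c d : S) : mkD a b * mkD c d = mkD (a * c) (a * d + b * c). Proof. by []. Qed.
Lemma oneD : (1 : D) = mkD 1 0. Proof. by []. Qed.
Lemma zeroD : (0 : D) = mkD 0 0. Proof. by []. Qed.
Lemma mkDE (x : D) : x = mkD x.1 x.2. Proof. by case: x. Qed.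
Lemma mkD_eq a b c d : mkD a b = mkD c d -> a = c /\ b = d.
Proof. by case=> -> ->. Qed.

Lemma fst_add (x y : D) : (x + y).1 = x.1 + y.1.
Proof. by rewrite (mkDE x) (mkDE y) addD. Qed.
Lemma snd_add (x y : D) : (x + y).2 = x.2 + y.2.
Proof. by rewrite (mkDE x) (mkDE y) addD. Qed.
Lemma fst_sum (I : Type) (r : seq I) (P : pred I) (F : I -> D) :
  (\sum_(i <- r | P i) F i).1 = \sum_(i <- r | P i) (F i).1.
Proof. exact: (big_morph (fun x : D => x.1) fst_add). Qed.

Lemma rhom_to_dual : rhom (@to_dual S).
Proof.
rewrite /rhom; split; [by [] | by [] | move=> x y | move=> x y]; rewrite /to_dual.
  by rewrite -[(x + y, 0)]/(mkD (x + y) 0) -[(x, 0)]/(mkD x 0) -[(y,0)]/(mkD y 0) addD addr0.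
rewrite -[(x * y, 0)]/(mkD (x * y) 0) -[(x, 0)]/(mkD x 0) -[(y,0)]/(mkD y 0) mulD.
by rewrite mulr0 mul0r addr0.
Qed.

Lemma rhom_red : rhom (@dual_red S).
Proof.
rewrite /rhom; split; [by [] | by [] | move=> x y | move=> x y]; rewrite /dual_red (mkDE x) (mkDE y); first by rewrite addD.
by rewrite mulD.
Qed.

Lemma rhom_dual_map (S' : comPzRingType) (h : S -> S') : rhom h -> rhom (dual_map h).
Proof.
move=> hh; rewrite /rhom; split; [ | | move=> x y | move=> x y]; rewrite /dual_map.
- by rewrite /= (hom0 hh).
- by rewrite /= (hom0 hh) (hom1 hh).
- by rewrite (mkDE x) (mkDE y) addD /= !(homD hh).
- by rewrite (mkDE x) (mkDE y) mulD /= !(homD hh) !(homM hh).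
Qed.

Definition incl n (f : ps S n) : ps D n := ps_map (@to_dual S) f.
Definition eps n (w : ps S n) : ps D n := ps_map (fun s => mkD 0 s) w.
Definition red n (z : ps D n) : ps S n := ps_map (@dual_red S) z.
Definition sndp n (z : ps D n) : ps S n := ps_map (fun x : D => x.2) z.
Definition epsP n (z : ps D n) := forall m, (z m).1 = 0.

Lemma eps_zc n (w : ps S n) : zc w -> zc (eps w).
Proof. by rewrite /zero_const /eps /ps_map => ->. Qed.
Lemma epsP_eps n (w : ps S n) : epsP (eps w).
Proof. by []. Qed.
Lemma red_eps n (w : ps S n) : red (eps w) = ps_zero n.
Proof. by []. Qed.
Lemma red_incl n (f : ps S n) : red (incl f) = f.
Proof. by []. Qed.
Lemma sndp_eps n (w : ps S n) : sndp (eps w) = w.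
Proof. by []. Qed.
Lemma eps_sndp n (z : ps D n) : epsP z -> z = eps (sndp z).
Proof.
move=> h; apply: functional_extensionality => m.
by rewrite /eps /sndp /ps_map [LHS]mkDE h.
Qed.
Lemma eps_zero n : eps (ps_zero n) = ps_zero n.
Proof. by []. Qed.
Lemma incl_zero n : incl (ps_zero n) = ps_zero n.
Proof. by []. Qed.
Lemma eps_add n (a b : ps S n) : eps (ps_add a b) = ps_add (eps a) (eps b).
Proof.
apply: functional_extensionality => m.
by rewrite /eps /ps_map /ps_add addD addr0.
Qed.

Lemma mul_epsP n (a b : ps D n) : epsP a -> epsP b -> ps_mul a b = ps_zero n.
Proof.
move=> ha hb; apply: functional_extensionality => m; rewrite /ps_mul.
apply: big1 => u _; rewrite (mkDE (a _)) (mkDE (b _)) ha hb mulD.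
by rewrite !mul0r mulr0 add0r.
Qed.

Lemma epsP_mul n (a b : ps D n) : epsP a -> epsP (ps_mul a b).
Proof.
move=> ha m; rewrite /ps_mul fst_sum; apply: big1 => u _.
by rewrite (mkDE (a _)) (mkDE (b _)) ha mulD /= mul0r.
Qed.

Lemma exp_epsP n (u : ps D n) k : epsP u -> epsP (ps_exp u k.+1).
Proof. by move=> hu; apply: epsP_mul. Qed.

Lemma exp_epsP2 n (u : ps D n) k : epsP u -> ps_exp u k.+2 = ps_zero n.
Proof. by move=> hu; rewrite [ps_exp _ _]/= mul_epsP //; apply: exp_epsP. Qed.

Lemma exp0S n k : ps_exp (ps_zero (T := D) n) k.+1 = ps_zero n.
Proof. by rewrite [ps_exp _ _]/= ps_mul0l. Qed.

Lemma prodexp2 n (a b : ps D n) (e : mon 2) :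
  ps_prodexp (vec2 a b) e = ps_mul (ps_exp a (e ord0)) (ps_exp b (e (lift ord0 ord0))).
Proof.
rewrite /ps_prodexp !big_ord_recl big_ord0.
by rewrite [ps_mul _ (ps_one n)]ps_mulC ps_mul1.
Qed.

Lemma mon2_0 (e : mon 2) : e ord0 = 0%N -> e (lift ord0 ord0) = 0%N -> e = (fun _ => 0%N).
Proof.
move=> h0 h1; apply: functional_extensionality => i.
case: i => [[|[|j]]] Hi.
- by have -> : Ordinal Hi = ord0 by apply: val_inj.
- by have -> : Ordinal Hi = lift ord0 ord0 by apply: val_inj.
- by [].
Qed.

Lemma subst_split n (f : ps D 2) (u v : ps D n) : zc f -> epsP u -> epsP v ->
  ps_subst f (vec2 u v) =
  ps_add (ps_subst f (vec2 u (ps_zero n))) (ps_subst f (vec2 (ps_zero n) v)).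
Proof.
move=> hf hu hv; apply: functional_extensionality => m.
rewrite /ps_subst /ps_add -big_split; apply: eq_bigr => e _.
rewrite [RHS]/= -mulrDr !prodexp2.
case E0: (nat_of_ord (e ord0)) => [|k0]; case E1: (nat_of_ord (e (lift ord0 ord0))) => [|k1].
- by rewrite (mon2_0 (e := fun i => nat_of_ord (e i))) // hf !mul0r.
- by rewrite exp0S ps_mul0r /ps_zero add0r.
- by rewrite exp0S ps_mul0l /ps_zero addr0.
- rewrite (mul_epsP (exp_epsP k0 hu) (exp_epsP k1 hv)) !exp0S ps_mul0l ps_mul0r.
  by rewrite /ps_zero addr0.
Qed.

End Dual.

Set Default Proof Using "All".
Section Main.
Variable S : comPzRingType.
Variables (Fs Gs : ps S 2) (iGs : ps S 1).
Hypotheses (hF : is_fgl Fs) (hG : is_fgl Gs) (hiG : is_fgl_inv Gs iGs).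
Local Notation D := (dual S).
Local Notation zc := zero_const.
Local Notation Fd := (incl Fs).
Local Notation Gd := (incl Gs).
Local Notation iGd := (incl iGs).

Lemma hFd : is_fgl Fd. Proof. exact: (fgl_map (rhom_to_dual S)). Qed.
Lemma hGd : is_fgl Gd. Proof. exact: (fgl_map (rhom_to_dual S)). Qed.
Lemma hiGd : is_fgl_inv Gd iGd. Proof. exact: (fgl_inv_map (rhom_to_dual S)). Qed.
Let hga := ga_fgl S.
Let higa := ga_fgl_inv S.

Definition PhiT n (z : ps D n) : ps S n :=
  sndp (addG Gd z (negG iGd (incl (red z)))).

Lemma incl_zc n (f : ps S n) : zc f -> zc (incl f).
Proof. exact: (map_zc (rhom_to_dual S)). Qed.
Lemma red_zc n (f : ps D n) : zc f -> zc (red f).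
Proof. exact: (map_zc (rhom_red S)). Qed.

Lemma red_add n (a b : ps D n) : red (addG Gd a b) = addG Gs (red a) (red b).
Proof. exact: (map_addG (rhom_red S)). Qed.
Lemma red_neg n (a : ps D n) : red (negG iGd a) = negG iGs (red a).
Proof. exact: (map_negG (rhom_red S)). Qed.
Lemma incl_add n (a b : ps S n) : incl (addG Gs a b) = addG Gd (incl a) (incl b).
Proof. exact: (map_addG (rhom_to_dual S)). Qed.

Lemma dec_epsP n (z : ps D n) : zc z -> epsP (addG Gd z (negG iGd (incl (red z)))).
Proof.
move=> hz m.
have : red (addG Gd z (negG iGd (incl (red z)))) = ps_zero n.
  by rewrite red_add red_neg red_incl (gaddrN hG hiG) //; exact: red_zc.
by move/(congr1 (fun f => f m)).
Qed.

Lemma dec_eq n (z : ps D n) : zc z -> addG Gd z (negG iGd (incl (red z))) = eps (PhiT z).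
Proof. by move=> hz; apply: eps_sndp; apply: dec_epsP. Qed.

Lemma Phi_zc n (z : ps D n) : zc z -> zc (PhiT z).
Proof.
move=> hz; rewrite /PhiT /zero_const /sndp /ps_map.
have := add_zc hGd hiGd hz (neg_zc hGd hiGd (incl_zc (red_zc hz))).
by rewrite /zero_const => ->.
Qed.

Lemma decomp n (z : ps D n) : zc z -> z = addG Gd (incl (red z)) (eps (PhiT z)).
Proof.
move=> hz; rewrite -dec_eq //.
have hr := incl_zc (red_zc hz).
rewrite (gaddC hGd hiGd hz (neg_zc hGd hiGd hr)).
by rewrite (gaddKr hGd hiGd hr hz).
Qed.

Lemma Phi_char n (z : ps D n) (a w : ps S n) : zc a -> zc w ->
  z = addG Gd (incl a) (eps w) -> PhiT z = w.
Proof.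
move=> ha hw ->.
have hia := incl_zc ha; have hew := eps_zc hw.
rewrite /PhiT red_add red_incl red_eps (gaddr0 hG hiG) //.
rewrite (gaddC hGd hiGd hia hew) (gaddA hGd hiGd hew hia (neg_zc hGd hiGd hia)).
by rewrite (gaddrN hGd hiGd hia) (gaddr0 hGd hiGd hew) sndp_eps.
Qed.

Lemma eps_addG n (a b : ps S n) : zc a -> zc b ->
  addG Gd (eps a) (eps b) = eps (ps_add a b).
Proof.
move=> ha hb; rewrite /addG subst_split; last 3 first.
- exact: (G_zc hGd hiGd).
- exact: epsP_eps.
- exact: epsP_eps.
have e1 := gaddr0 hGd hiGd (eps_zc ha); have e2 := gadd0r hGd hiGd (eps_zc hb).
rewrite /addG in e1 e2; rewrite e1 e2.
by rewrite eps_add.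
Qed.

Lemma eps_neg n (a : ps S n) : zc a -> negG iGd (eps a) = eps (ps_opp a).
Proof.
move=> ha; have hn : zc (ps_opp a) by rewrite /zero_const /ps_opp ha oppr0.
symmetry; apply: (neg_unique hGd hiGd); try exact: eps_zc.
rewrite eps_addG //.
have -> : ps_add a (ps_opp a) = ps_zero n.
  by apply: functional_extensionality => m; rewrite /ps_add /ps_opp subrr.
by [].
Qed.

Lemma sum_mkD0 (I : Type) (r : seq I) (P : pred I) (F : I -> S) :
  \sum_(i <- r | P i) mkD 0 (F i) = mkD 0 (\sum_(i <- r | P i) F i).
Proof.
apply: esym; apply: (big_morph (fun s => mkD 0 s)) => [x y|] //.
by rewrite addD addr0.
Qed.

Lemma subst_eps_incl k n (h : ps S k) (g : 'I_k -> ps S n) :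
  ps_subst (eps h) (fun i => incl (g i)) = eps (ps_subst h g).
Proof.
apply: functional_extensionality => m; rewrite /ps_subst.
transitivity (mkD 0 (\sum_(e : {ffun 'I_k -> 'I_(Defs.mdeg m).+1})
   h (fun i => nat_of_ord (e i)) * ps_prodexp g (fun i => nat_of_ord (e i)) m)); last by [].
rewrite -sum_mkD0; apply: eq_bigr => e _.
rewrite -(map_prodexp (rhom_to_dual S)).
transitivity (mkD 0 (h (fun i => nat_of_ord (e i))) * mkD (ps_prodexp g (fun i => nat_of_ord (e i)) m) 0); first by [].
by rewrite mulD mul0r mulr0 add0r.
Qed.

Lemma face_incl n i : face Fd n i = (fun j => incl (face Fs n i j)).
Proof. by rewrite -(map_face (rhom_to_dual S)). Qed.

Lemma delta_eps n (h : ps S n) : zc h ->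
  delta Fd Gd iGd (eps h) = eps (delta Fs (ga_law S) (ga_inv S) h).
Proof.
move=> hh; rewrite /delta.
apply: (proj1 (big_ind2 (fun x y => x = eps y /\ zc y) _ _ _)) => //.
- move=> x1 x2 y1 y2 [-> z1] [-> z2]; split; last exact: (add_zc hga higa).
  by rewrite eps_addG // ga_add.
- move=> i _; have zs : zc (ps_subst h (face Fs n i)).
    by rewrite /zero_const subst_zc // => j; exact: (face_zc hF hG hiG).
  rewrite face_incl subst_eps_incl.
  case: ifP => _; last by [].
  split; last exact: (neg_zc hga higa).
  by rewrite eps_neg // ga_neg.
Qed.

Lemma delta_incl n (f : ps S n) : delta Fd Gd iGd (incl f) = incl (delta Fs Gs iGs f).
Proof. by symmetry; exact: (map_delta (rhom_to_dual S)). Qed.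

Lemma delta_red n (z : ps D n) : red (delta Fd Gd iGd z) = delta Fs Gs iGs (red z).
Proof. exact: (map_delta (rhom_red S)). Qed.

End Main.

Set Default Proof Using "All".
Section Coh.
Variables (T : comPzRingType) (F G : ps T 2) (iG : ps T 1).
Hypotheses (hF : is_fgl F) (hG : is_fgl G) (hiG : is_fgl_inv G iG).
Local Notation zc := zero_const.

Lemma cob_zc n (b : ps T n) : coboundary F G iG b -> zc b.
Proof.
case: n b => [|k] b /=; first by move->.
by case=> g [hg ->]; apply: (delta_zc hF hG hiG).
Qed.

Lemma cob_zero n : coboundary F G iG (ps_zero n).
Proof.
case: n => [|k] //=; exists (ps_zero k); split => //.
by rewrite (delta_zero hF hG hiG).
Qed.

Lemma coh0 n (f : ps T n) : cohomologous F G iG f (ps_zero n) <-> coboundary F G iG f.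
Proof.
split.
  by case=> b [hb ->]; rewrite (gadd0r hG hiG) //; apply: cob_zc.
by move=> hf; exists f; split => //; rewrite (gadd0r hG hiG) //; apply: cob_zc.
Qed.

Lemma coh_refl n (f : ps T n) : zc f -> cohomologous F G iG f f.
Proof.
move=> hf; exists (ps_zero n); split; first exact: cob_zero.
by rewrite (gaddr0 hG hiG).
Qed.
End Coh.

Section Clauses.
Variable S : comPzRingType.
Variables (Fs Gs : ps S 2) (iGs : ps S 1).
Hypotheses (hF : is_fgl Fs) (hG : is_fgl Gs) (hiG : is_fgl_inv Gs iGs).
Local Notation D := (dual S).
Local Notation zc := zero_const.
Local Notation Fd := (incl Fs).
Local Notation Gd := (incl Gs).
Local Notation iGd := (incl iGs).
Local Notation Ph := (PhiT Gs iGs).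
Local Notation ga := (ga_law S).
Local Notation gi := (ga_inv S).
Let hga := ga_fgl S.
Let higa := ga_fgl_inv S.
Let hFd := hFd hF hG hiG.
Let hGd := hGd hF hG hiG.
Let hiGd := hiGd hF hG hiG.
Let izc := incl_zc hF hG hiG.
Let rzc := red_zc hF hG hiG.

Lemma Phi0 n : Ph (ps_zero n) = ps_zero n.
Proof.
apply: (Phi_char hF hG hiG (a := ps_zero n)) => //.
by rewrite incl_zero eps_zero (gaddr0 hGd hiGd).
Qed.

Lemma dec_add n (a a' w w' : ps S n) : zc a -> zc a' -> zc w -> zc w' ->
  addG Gd (addG Gd (incl a) (eps w)) (addG Gd (incl a') (eps w')) =
  addG Gd (incl (addG Gs a a')) (eps (ps_add w w')).
Proof.
move=> ha ha' hw hw'.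
rewrite (add_swap hGd hiGd (izc ha) (eps_zc hw) (izc ha') (eps_zc hw')).
by rewrite (incl_add hF hG hiG) (eps_addG hF hG hiG).
Qed.

Lemma delta_dec n (a w : ps S n) : zc a -> zc w ->
  delta Fd Gd iGd (addG Gd (incl a) (eps w)) =
  addG Gd (incl (delta Fs Gs iGs a)) (eps (delta Fs ga gi w)).
Proof.
move=> ha hw; rewrite (delta_add hFd hGd hiGd (izc ha) (eps_zc hw)).
by rewrite (delta_incl hF hG hiG) (delta_eps hF hG hiG).
Qed.

Lemma clause1 n (z : ps D n) : cocycle Fd Gd iGd z -> cocycle Fs ga gi (Ph z).
Proof.
case=> hz dz; split; first exact: (Phi_zc hF hG hiG).
have hw := Phi_zc hF hG hiG hz; have hr := rzc hz.
have dr : delta Fs Gs iGs (red z) = ps_zero n.+1.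
  by rewrite -(delta_red hF hG hiG) dz.
have E : ps_zero n.+1 = addG Gd (incl (ps_zero n.+1)) (eps (delta Fs ga gi (Ph z))).
  by rewrite -dr -delta_dec // -(decomp hF hG hiG).
have := Phi_char hF hG hiG (@zc_zero S n.+1) (delta_zc hF hga higa hw) E.
by rewrite Phi0.
Qed.

Lemma clause2 n (z z' : ps D n) : zc z -> zc z' ->
  Ph (addG Gd z z') = addG ga (Ph z) (Ph z').
Proof.
move=> hz hz'; have hw := Phi_zc hF hG hiG hz; have hw' := Phi_zc hF hG hiG hz'.
rewrite ga_add //.
apply: (Phi_char hF hG hiG (a := addG Gs (red z) (red z'))).
- by apply: (add_zc hG hiG); apply: rzc.
- by rewrite /zero_const /ps_add hw hw' addr0.
rewrite {1}(decomp hF hG hiG hz) {1}(decomp hF hG hiG hz').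
by rewrite dec_add //; apply: rzc.
Qed.

Lemma clause3 n (z : ps D n) : zc z -> coboundary Fs Gs iGs (red z) ->
  (coboundary Fd Gd iGd z <-> coboundary Fs ga gi (Ph z)).
Proof.
move=> hz; case: n z hz => [|k] z hz /=.
  move=> hr; split; first by move=> ->; exact: Phi0.
  move=> hp; rewrite (decomp hF hG hiG hz) hr hp incl_zero eps_zero.
  by rewrite (gaddr0 hGd hiGd).
case=> g1 [hg1 er]; split.
  case=> g [hg ->].
  have hr := rzc hg; have hw := Phi_zc hF hG hiG hg.
  exists (Ph g); split => //.
  rewrite {1}(decomp hF hG hiG hg) delta_dec //.
  apply: (Phi_char hF hG hiG) => //; first exact: (delta_zc hF hG hiG).
  exact: (delta_zc hF hga higa).
case=> h [hh eh].
exists (addG Gd (incl g1) (eps h)); split.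
  by apply: (add_zc hGd hiGd); [apply: izc | apply: eps_zc].
by rewrite delta_dec // -er -eh -(decomp hF hG hiG).
Qed.

Lemma clause4 n (w : ps S n) : cocycle Fs ga gi w ->
  cocycle Fd Gd iGd (eps w) /\ coboundary Fs Gs iGs (red (eps w)) /\ Ph (eps w) = w.
Proof.
case=> hw dw; split; [split|split].
- exact: eps_zc.
- by rewrite (delta_eps hF hG hiG) // dw.
- by rewrite red_eps; apply: (cob_zero hF hG hiG).
apply: (Phi_char hF hG hiG (a := ps_zero n)) => //.
by rewrite incl_zero (gadd0r hGd hiGd) //; apply: eps_zc.
Qed.

End Clauses.

Lemma Phi_nat (S S' : comPzRingType) (h : S -> S') (hh : rhom h)
  (Gs : ps S 2) (iGs : ps S 1) (Gs' : ps S' 2) (iGs' : ps S' 1) n (z : ps (dual S) n) :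
  Gs' = ps_map h Gs -> iGs' = ps_map h iGs ->
  PhiT Gs' iGs' (ps_map (dual_map h) z) = ps_map h (PhiT Gs iGs z).
Proof.
move=> -> ->.
have hd := rhom_dual_map hh.
have ei : forall k (a : ps S k), incl (ps_map h a) = ps_map (dual_map h) (incl a).
  move=> k a; apply: functional_extensionality => m.
  by rewrite /incl /ps_map /dual_map /to_dual /= (hom0 hh).
rewrite /PhiT.
have -> : red (ps_map (dual_map h) z) = ps_map h (red z) by [].
rewrite !ei -(map_negG hd) -(map_addG hd).
by [].
Qed.

Theorem mainTheorem3 (R : comPzRingType) (F G : ps R 2) (iG : ps R 1) :
  is_fgl F -> is_fgl G -> is_fgl_inv G iG ->
  forall n : nat,
  exists Phi : forall S : comPzRingType, {rmorphism R -> S} -> ps (dual S) n -> ps S n,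
    (* Phi lands in the cocycles of H^n(F; Ga)(S) *)
    (forall (S : comPzRingType) (phi : {rmorphism R -> S}) z,
       inT1 phi F G iG z ->
       cocycle (ps_map phi F) (ga_law S) (ga_inv S) (Phi S phi z)) /\
    (* it is a group homomorphism on classes *)
    (forall (S : comPzRingType) (phi : {rmorphism R -> S}) z z',
       inT1 phi F G iG z -> inT1 phi F G iG z' ->
       cohomologous (ps_map phi F) (ga_law S) (ga_inv S)
         (Phi S phi (addG (ps_map (fun r => to_dual (phi r)) G) z z'))
         (addG (ga_law S) (Phi S phi z) (Phi S phi z'))) /\
    (* it is well defined and injective on classes *)
    (forall (S : comPzRingType) (phi : {rmorphism R -> S}) z,
       inT1 phi F G iG z ->
       (cohomologous (ps_map (fun r => to_dual (phi r)) F)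
                     (ps_map (fun r => to_dual (phi r)) G)
                     (ps_map (fun r => to_dual (phi r)) iG) z (ps_zero n)
        <-> cohomologous (ps_map phi F) (ga_law S) (ga_inv S)
                         (Phi S phi z) (ps_zero n))) /\
    (* it is surjective on classes *)
    (forall (S : comPzRingType) (phi : {rmorphism R -> S}) w,
       cocycle (ps_map phi F) (ga_law S) (ga_inv S) w ->
       exists z, inT1 phi F G iG z /\
         cohomologous (ps_map phi F) (ga_law S) (ga_inv S) (Phi S phi z) w) /\
    (* it is natural in R-algebra homomorphisms h : S -> S' *)
    (forall (S S' : comPzRingType) (phi : {rmorphism R -> S})
            (phi' : {rmorphism R -> S'}) (h : {rmorphism S -> S'}),
       (forall r, h (phi r) = phi' r) ->
       forall z, inT1 phi F G iG z ->
       cohomologous (ps_map phi' F) (ga_law S') (ga_inv S')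
         (Phi S' phi' (ps_map (dual_map h) z)) (ps_map h (Phi S phi z))).
Proof.
move=> hF hG hiG n.
exists (fun S phi z => PhiT (ps_map phi G) (ps_map phi iG) z).
have H : forall (S : comPzRingType) (phi : {rmorphism R -> S}),
  [/\ is_fgl (ps_map phi F), is_fgl (ps_map phi G) & is_fgl_inv (ps_map phi G) (ps_map phi iG)].
  move=> S phi; have hh := rhom_rmorph phi.
  by split; [exact: (fgl_map hh) | exact: (fgl_map hh) | exact: (fgl_inv_map hh)].
split; [|split; [|split; [|split]]].
- move=> S phi z [hc _]; have [hFs hGs hiGs] := H S phi.
  exact: (clause1 hFs hGs hiGs hc).
- move=> S phi z z' [[hz _] _] [[hz' _] _]; have [hFs hGs hiGs] := H S phi.
  rewrite (clause2 hFs hGs hiGs hz hz').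
  apply: (coh_refl hFs (ga_fgl S) (ga_fgl_inv S)).
  by apply: (add_zc (ga_fgl S) (ga_fgl_inv S)); apply: (Phi_zc hFs hGs hiGs).
- move=> S phi z [[hz dz] hred]; have [hFs hGs hiGs] := H S phi.
  have hr := (coh0 hFs hGs hiGs _).1 hred.
  apply: (iff_trans (coh0 (hFd hFs hGs hiGs) (hGd hFs hGs hiGs) (hiGd hFs hGs hiGs) _)).
  apply: (iff_trans (clause3 hFs hGs hiGs hz hr)).
  exact: iff_sym (coh0 hFs (ga_fgl S) (ga_fgl_inv S) _).
- move=> S phi w hw; have [hFs hGs hiGs] := H S phi.
  have [c1 [c2 c3]] := clause4 hFs hGs hiGs hw.
  exists (eps w); split.
    by split => //; apply: (coh0 hFs hGs hiGs _).2.
  rewrite /= c3; apply: (coh_refl hFs (ga_fgl S) (ga_fgl_inv S)).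
  by case: hw.
- move=> S S' phi phi' h hcomp z [[hz _] _].
  have [hFs hGs hiGs] := H S phi; have [hFs' hGs' hiGs'] := H S' phi'.
  have hh := rhom_rmorph h.
  rewrite /= (Phi_nat hh (Gs := ps_map phi G) (iGs := ps_map phi iG)); first last.
  + by apply: functional_extensionality => m; rewrite /ps_map hcomp.
  + by apply: functional_extensionality => m; rewrite /ps_map hcomp.
  apply: (coh_refl hFs' (ga_fgl S') (ga_fgl_inv S')).
  by apply: (map_zc hh); apply: (Phi_zc hFs hGs hiGs).
Qed.
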